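(* Let $(X,\nu)$ be a probability space and $g:X\to X$ an invertible (mod $0$) measure preserving transformation. Let $Y$ be a compact Riemannian manifold and for each $x\in X$ let $f_x:Y\to Y$ be a diffeomorphism, depending measurably on $x$; let $F(x,y)=(g(x),f_x(y))$ and let $\mu=\int_X\sigma_x\,d\nu(x)$ be an ergodic $F$-invariant probability measure on $X\times Y$, where the $\sigma_x$ are probability measures on $Y$ with $(f_x)_*\sigma_x=\sigma_{g(x)}$. Let $P\subset X\times Y$ be a measurable subset, let $\pi:X\times Y\to X$ be the projection and $B=\pi(P)$, and for $x\in B$ write $P(x)=P\cap(\{x\}\times Y)$. Assume $\nu(B)=\nu_0>0$ and that there is $\sigma_0>0$ such that $\sigma_x(P(x))>\sigma_0$ for almost every $x\in B$. For almost every $z\in P$ let $n_l(z)$ denote the $l$-th return time of $z$ to $P$ under $F$ (for an integer $l\ge1$). Define $$P_n^l(x)=\{z\in P(x)\,:\,n_l(z)\ge n\},\qquad N_l(x)=\max\{n\,:\,\sigma_x(P_n^l(x))>\sigma_0\}.$$ Then $$\int_B N_l(x)\,d\nu<\frac{l}{\sigma_0}<\infty.$$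
   Context: The $l$-th return time $n_l(z)$ of $z\in P$ is the $l$-th smallest positive integer $n$ with $F^n(z)\in P$. Measures $\sigma_x(P(x))$ are understood by identifying $\{x\}\times Y$ with $Y$. *)

(* Defs.v *)
From HB Require Import structures.
From mathcomp Require Import all_boot all_order all_algebra.
From mathcomp Require Import all_classical all_reals all_analysis.
Set Implicit Arguments. Unset Strict Implicit. Unset Printing Implicit Defensive.
Import Order.TTheory GRing.Theory Num.Theory.
Local Open Scope classical_set_scope.
Local Open Scope ring_scope.

Definition skew_product {X Y : Type} (g : X -> X) (f : X -> Y -> Y) (z : X * Y) : X * Y :=
  (g z.1, f z.1 z.2).

Definition return_count {T : Type} (F : T -> T) (P : set T) (z : T) (m : nat) : nat :=
  (\sum_(1 <= k < m.+1) `[< P (iter k F z) >])%N.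

Definition is_lth_return_time {T : Type} (F : T -> T) (P : set T) (l : nat)
  (z : T) (n : nat) : Prop :=
  (0 < n)%N /\ P (iter n F z) /\ return_count F P z n = l.

(* "n_l(z) >= n"; if z has fewer than l returns, n_l(z) = +oo by convention *)
Definition lth_return_time_ge {T : Type} (F : T -> T) (P : set T) (l : nat)
  (z : T) (n : nat) : Prop :=
  forall m, is_lth_return_time F P l z m -> (n <= m)%N.

Definition Pnl {X Y : Type} (F : X * Y -> X * Y) (P : set (X * Y)) (l n : nat)
  (x : X) : set Y :=
  [set y | P (x, y) /\ lth_return_time_ge F P l (x, y) n].

(* N_l(x) = max { n : sigma_x(P_n^l(x)) > sigma_0 }, taken as a supremum in
   the extended reals (+oo if unbounded) *)
Definition Nl {d1 d2 : measure_display} {X : measurableType d1}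
  {Y : measurableType d2} {R : realType} (sigma : X -> {measure set Y -> \bar R})
  (F : X * Y -> X * Y) (P : set (X * Y)) (l : nat) (sigma0 : R) (x : X) : \bar R :=
  ereal_sup [set (n%:R)%:E | n in [set n : nat | (sigma0%:E < sigma x (Pnl F P l n x))%E]].

(* Main.v *)
Require Import Defs.
From HB Require Import structures.
From mathcomp Require Import all_boot all_order all_algebra.
From mathcomp Require Import all_classical all_reals all_analysis.
From mathcomp Require Import measurable_realfun.
From mathcomp Require Import zify ring lra.
Import Order.TTheory GRing.Theory Num.Theory.
Local Open Scope classical_set_scope.
Local Open Scope ring_scope.
Lemma comb (c : nat -> bool) (M l : nat) :
  (\sum_(t < M) (c t && (\sum_(t.+1 <= k < M) c k < l)%N) <= l)%N.
Proof.
elim: M l => [|M IH] l; first by rewrite big_ord0.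
rewrite big_ord_recr /= big_geq //.
have E (i : 'I_M) : (\sum_(i.+1 <= k < M.+1) c k = \sum_(i.+1 <= k < M) c k + c M)%N.
  by rewrite big_nat_recr //=.
under eq_bigr => i _ do rewrite E.
case cM: (c M).
- case: l => [|l].
    by rewrite big1 // => i _; rewrite ltn0 andbF.
  rewrite ltn0Sn /= addn1 ltnS.
  under eq_bigr => i _ do rewrite addn1 ltnS.
  exact: IH.
- rewrite andFb addn0; under eq_bigr => i _ do rewrite addn0.
  exact: IH.
Qed.
Section Gen.
Local Open Scope ereal_scope.
Context {d : measure_display} {T : measurableType d} {R : realType}
  (mu : probability T R) (F : T -> T)
  (mF : measurable_fun setT F)
  (Finv : forall A, measurable A -> mu (F @^-1` A) = mu A)
  (P : set T) (mP : measurable P).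

Lemma mpre (h : T -> T) (A : set T) : measurable_fun setT h -> measurable A ->
  measurable (h @^-1` A).
Proof. by move=> mh mA; rewrite -[_ @^-1` _]setTI; exact: mh. Qed.

Lemma miter n : measurable_fun setT (iter n F).
Proof.
elim: n => [|n IH]; first exact: measurable_id.
exact: (measurableT_comp mF IH).
Qed.

Lemma inviter n A : measurable A -> mu (iter n F @^-1` A) = mu A.
Proof.
elim: n A => [|n IH] A mA //.
rewrite (_ : iter n.+1 F @^-1` A = iter n F @^-1` (F @^-1` A)) //.
by rewrite IH ?Finv //; exact: mpre.
Qed.

Definition cnt z m := return_count F P z m.

Lemma cntS z m : cnt z m.+1 = (cnt z m + `[< P (iter m.+1 F z) >])%N.
Proof. by rewrite /cnt /return_count big_nat_recr. Qed.

Lemma cnt0 z : cnt z 0 = 0%N.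
Proof. by rewrite /cnt /return_count big_geq. Qed.

Lemma mcnt m j : measurable [set z | (cnt z m < j)%N].
Proof.
elim: m j => [|m IH] j.
  case: j => [|j].
    by rewrite (_ : [set z | _] = set0) //; apply/seteqP; split => z //=.
  by rewrite (_ : [set z | _] = setT) //; apply/seteqP; split => z //=; rewrite cnt0.
rewrite (_ : [set z | _] = ([set z | (cnt z m < j)%N] `&` ~` (iter m.+1 F @^-1` P))
   `|` ([set z | (cnt z m < j.-1)%N] `&` (iter m.+1 F @^-1` P))).
  apply: measurableU; apply: measurableI => //; first apply: measurableC;
  exact: mpre (miter _) mP.
apply/seteqP; split => z /=; rewrite cntS; case: (asboolP (P (iter m.+1 F z))) => h /=.
- by case: j => [|j]//=; rewrite addn1 ltnS => ?; right.
- by rewrite addn0 => ?; left.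
- by case => [[_ //]|[]]; case: j => //= j; rewrite addn1 ltnS.
- by rewrite addn0; case => [[]//|[_ //]].
Qed.

Lemma mQ l m : measurable [set z | P z /\ (cnt z m < l)%N].
Proof. exact: measurableI mP (mcnt m l). Qed.

Lemma cnt_shift z i m :
  cnt (iter i F z) m = (\sum_(i.+1 <= k < (i + m).+1) `[< P (iter k F z) >])%N.
Proof.
rewrite /cnt /return_count big_add1 /= -[X in (_ = \sum_(X <= _ < _) _)%N]add0n.
rewrite [RHS]big_addn subSS addKn.
by apply: eq_bigr => k _; rewrite -iterD addnS.
Qed.

Lemma bound l M : \sum_(m < M) mu [set z | P z /\ (cnt z m < l)%N] <= l%:R%:E.
Proof.
rewrite (reindex_inj rev_ord_inj) /=.
have E (i : 'I_M) : mu [set z | P z /\ (cnt z ((M - i.+1)%N) < l)%N] =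
   \int[mu]_z (\1_(iter i F @^-1` [set z | P z /\ (cnt z ((M - i.+1)%N) < l)%N]) z)%:E.
  have mA : measurable (iter i F @^-1` [set z | P z /\ (cnt z ((M - i.+1)%N) < l)%N]).
    by apply: mpre; [exact: miter| exact: mQ].
  by rewrite integral_indic // setIT; symmetry; apply: inviter; exact: mQ.
under eq_bigr => i _ do rewrite E.
rewrite -ge0_integral_sum //; last first.
  move=> i; apply/measurable_EFinP; apply: measurable_indic.
  by apply: mpre; [exact: miter| exact: mQ].
apply: (@le_trans _ _ (\int[mu]_z (l%:R)%:E)); last first.
  have h1 : (mu : {measure set T -> \bar R}) setT = 1 by exact: probability_setT.
  by rewrite integral_cst // h1 mule1.
apply: ge0_le_integral => //.
- by move=> z _; apply: sume_ge0 => i _; rewrite lee_fin.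
- apply: emeasurable_sum => i; apply/measurable_EFinP; apply: measurable_indic.
  by apply: mpre; [exact: miter| exact: mQ].
move=> z _; rewrite sumEFin lee_fin.
under eq_bigr => i _ do rewrite indicE.
rewrite -natr_sum ler_nat.
apply: leq_trans (comb (fun k => `[< P (iter k F z) >]) M l).
rewrite leq_eqVlt; apply/orP; left; apply/eqP.
apply: eq_bigr => i _.
have Hi : ((i + (M - i.+1)).+1 = M)%N by have := ltn_ord i; lia.
congr nat_of_bool.
apply/idP/idP => [/set_mem /= [h1 h2]|/andP [h1 h2]].
  by apply/andP; split; [exact/asboolP| rewrite cnt_shift Hi in h2].
by apply/mem_set; split; [exact/asboolP| rewrite cnt_shift Hi].
Qed.
Lemma series_bound l : \sum_(m <oo) mu [set z | P z /\ (cnt z m < l)%N] <= l%:R%:E.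
Proof.
apply: lime_le; first by apply: is_cvg_nneseries.
by apply: nearW => M; rewrite big_mkord; exact: bound.
Qed.

Lemma cnt_mono z m m' : (m <= m')%N -> (cnt z m <= cnt z m')%N.
Proof.
move=> /subnK <-; elim: (m' - m)%N => [|k IH]; rewrite ?add0n //.
by rewrite addSn cntS; exact: leq_trans IH (leq_addr _ _).
Qed.

Lemma lth_geP l z n : (0 < l)%N ->
  lth_return_time_ge F P l z n <-> (cnt z n.-1 < l)%N.
Proof.
move=> l0; split.
- move=> H; rewrite ltnNge; apply/negP => Hl.
  have ex : exists k, (l <= cnt z k)%N by exists n.-1.
  case: (ex_minnP ex) => m0 Hm0 Hmin.
  case: m0 Hm0 Hmin => [|m'] Hm0 Hmin; first by rewrite cnt0 leqNgt l0 in Hm0.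
  have Hm' : (cnt z m' < l)%N.
    rewrite ltnNge; apply/negP => /Hmin; by rewrite ltnn.
  move: Hm0; rewrite cntS; case: (asboolP (P (iter m'.+1 F z))) => hP /=; last first.
    by rewrite addn0 leqNgt Hm'.
  move=> Hm0.
  have Heq : cnt z m'.+1 = l.
    rewrite cntS; case: asboolP => // _; apply/eqP; rewrite eqn_leq Hm0 andbT.
    by rewrite addn1.
  have := H m'.+1 (conj (ltn0Sn _) (conj hP Heq)).
  have := Hmin _ Hl; move: Hl; case: n {H ex} => [|n] /= Hl.
    by rewrite cnt0 leqNgt l0 in Hl.
  by move=> h1 h2; have := leq_trans h2 h1; rewrite ltnn.
- move=> H m [m0 [hP hc]]; rewrite leqNgt; apply/negP => Hmn.
  have : (cnt z m <= cnt z n.-1)%N by apply: cnt_mono; case: n H Hmn => //.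
  by rewrite /cnt hc leqNgt -/(cnt z n.-1) H.
Qed.
End Gen.
Section LI.
Local Open Scope ereal_scope.
Lemma le_int_nm {d} {T : measurableType d} {R : realType} (mu : {measure set T -> \bar R})
  (D : set T) (f h : T -> \bar R) :
  (forall x, D x -> 0 <= h x)%E -> (forall x, D x -> f x <= h x)%E ->
  (\int[mu]_(x in D) f x <= \int[mu]_(x in D) h x)%E.
Proof.
move=> h0 fh; rewrite integralE.
apply: (@le_trans _ _ (\int[mu]_(x in D) f^\+ x)).
  have fn0 : 0 <= \int[mu]_(x in D) f^\- x.
    by apply: integral_ge0 => x _; exact: funeneg_ge0.
  move: fn0; case: (\int[mu]_(x in D) f^\- x) => [r| |] //= r0.
    by rewrite geeDl // lee_fin oppr_le0 -lee_fin.
  by rewrite addeNy leNye.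
rewrite (ge0_integralE mu h0) (ge0_integralE mu (fun x _ => funepos_ge0 f x)).
apply: ereal_sup_le => _ [k /= Hk <-]; exists k => //= x.
apply: le_trans (Hk x) _; rewrite !patchE; case: ifPn => // /set_mem Dx.
by rewrite funeposE ge_max fh // h0.
Qed.
End LI.
Theorem theorem3p1 (R : realType) (d1 d2 : measure_display)
  (X : measurableType d1) (Y : measurableType d2)
  (nu : probability X R) (g : X -> X)
  (f : X -> Y -> Y) (sigma : R.-pker X ~> Y) (mu : probability (X * Y)%type R)
  (P : set (X * Y)) (l : nat) (sigma0 : R) :
  (* g : invertible (mod 0) measure preserving transformation of (X, nu) *)
  measurable_fun setT g ->
  (forall A, measurable A -> nu (g @^-1` A) = nu A) ->
  (exists g' : X -> X, measurable_fun setT g' /\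
     {ae nu, forall x, g' (g x) = x} /\ {ae nu, forall x, g (g' x) = x}) ->
  (* f_x : Y -> Y bimeasurable bijections, depending measurably on x *)
  measurable_fun setT (fun z : X * Y => f z.1 z.2) ->
  (forall x, exists h : Y -> Y, measurable_fun setT h /\
     cancel (f x) h /\ cancel h (f x)) ->
  (* (f_x)_* sigma_x = sigma_{g x} *)
  (forall x U, measurable U -> sigma x (f x @^-1` U) = sigma (g x) U) ->
  (* mu = \int sigma_x d nu *)
  (forall A, measurable A -> (mu A = \int[nu]_x sigma x (xsection A x))%E) ->
  (* mu is F-invariant and ergodic *)
  (forall A, measurable A -> mu (skew_product g f @^-1` A) = mu A) ->
  (forall A, measurable A -> skew_product g f @^-1` A = A -> mu A = 0%E \/ mu A = 1%E) ->
  measurable P ->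
  measurable (fst @` P) ->
  (0 < nu (fst @` P))%E ->
  0 < sigma0 ->
  {ae nu, forall x, (fst @` P) x -> (sigma0%:E < sigma x (xsection P x))%E} ->
  (1 <= l)%N ->
  (\int[nu]_(x in fst @` P) Nl sigma (skew_product g f) P l sigma0 x < (l%:R / sigma0)%:E)%E.
Proof.
move=> mg _ _ mf _ _ muE Finv _ mP mB B0 s0 Hae l1.
set F := skew_product g f.
set B := fst @` P.
have mF : measurable_fun setT F.
  apply: (@measurable_fun_pair _ _ _ _ _ _ (g \o fst) (fun z : X * Y => f z.1 z.2)) => //.
  exact: measurableT_comp mg measurable_fst.
pose Qc m := [set z | P z /\ (cnt F P z m < l)%N].
have mQc m : measurable (Qc m) by exact: mQ.
have Psec n x : Pnl F P l n x = xsection (Qc n.-1) x.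
  rewrite /Pnl /xsection; apply/seteqP; split => y /=; rewrite in_setE /=.
    by move=> [h1 h2]; split => //; apply/lth_geP.
  by move=> [h1 h2]; split => //; apply/lth_geP.
pose s n x := sigma x (Pnl F P l n x).
have ms n : measurable_fun setT (s n).
  rewrite /s (_ : (fun x => _) = (fun x => sigma x (xsection (Qc n.-1) x))).
    exact: measurable_fun_xsection_finite_kernel (mem_set (mQc _)).
  by apply/funext => x; rewrite Psec.
have s0B n x : ~ B x -> s n x = 0%E.
  move=> nB; rewrite /s (_ : Pnl _ _ _ _ _ = set0) ?measure0 //.
  by apply/seteqP; split => y //= [hP _]; apply: nB; exists (x, y).
have s_ge0 n x : (0 <= s n x)%E by exact: measure_ge0.
have int_s n : (\int[nu]_(x in B) s n x = mu (Qc n.-1))%E.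
  rewrite muE // integral_mkcond; apply: eq_integral => x _.
  rewrite patchE; case: ifPn => [_|/negP nB]; first by rewrite /s Psec.
  rewrite -Psec -/(s n x) s0B //.
  by move=> Bx; apply: nB; exact: mem_set.
have mono x m n : (m <= n)%N -> (s n x <= s m x)%E.
  move=> mn; rewrite /s; apply: le_measure.
  - by rewrite Psec inE; exact: measurable_xsection.
  - by rewrite Psec inE; exact: measurable_xsection.
  move=> y [h1 h2]; split => // k /h2; exact: leq_trans.
pose c := sigma0^-1.
have c0 : 0 < c by rewrite invr_gt0.
pose u x k := (c%:E * s (k + 2)%N x)%E.
have u0 x k : (0 <= u x k)%E by rewrite mule_ge0 // lee_fin ltW.
have pt x : (Nl sigma F P l sigma0 x <= 1 + \sum_(k <oo) u x k)%E.
  apply: ge_ereal_sup => _ [n /= Hn <-].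
  have S0 : (0 <= \sum_(k <oo) u x k)%E.
    by apply: nneseries_ge0; move=> *; exact: u0.
  case: n Hn => [|[|n]] Hn.
  - by rewrite adde_ge0.
  - by rewrite leeDl.
  apply: (@le_trans _ _ (1 + \sum_(0 <= k < n.+1) u x k)%E); last first.
    by rewrite leeD2l // nneseries_lim_ge.
  apply: (@le_trans _ _ (1 + \sum_(0 <= k < n.+1) 1)%E); last first.
    rewrite leeD2l // !big_mkord lee_sum // => k _.
    rewrite /u -(mulVf (lt0r_neq0 s0)) EFinM lee_pmul2l ?lee_fin //.
    apply: le_trans (ltW Hn) (mono _ _ _ _).
    by rewrite addn2 ltnS; exact: ltn_ord.
  by rewrite sumEFin sumr_const_nat subn0 -EFinD lee_fin nat1r.
have mu_k k : measurable_fun B (u ^~ k).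
  by apply: measurable_funeM; exact: measurable_funTS (ms _).
have Sint : (\int[nu]_(x in B) (1 + \sum_(k <oo) u x k) =
    nu B + c%:E * \sum_(k <oo) mu (Qc k.+1))%E.
  rewrite ge0_integralD //; last 2 first.
  - by move=> x _; apply: nneseries_ge0; move=> *; exact: u0.
  - by apply: (ge0_emeasurable_sum (P := xpredT)) => // k x _ _; exact: u0.
  rewrite integral_cst // mul1e integral_nneseries //; try by move=> n x _; exact: u0.
  rewrite -nneseriesZl; try by move=> *; exact: measure_ge0.
  congr (_ + _)%E; apply: eq_eseriesr => k _.
  rewrite /u ge0_integralZl_EFin ?lee_fin ?ltW //; try by apply: measurable_funTS.
  rewrite addn2.
  exact: (congr1 (fun v => c%:E * v)%E (int_s k.+2)).
have ser : (mu P + \sum_(k <oo) mu (Qc k.+1) <= l%:R%:E)%E.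
  have H : (\sum_(m <oo) mu (Qc m) <= l%:R%:E)%E := series_bound mu F mF Finv P mP l.
  rewrite (nneseries_split 0 1) in H; last by move=> *; exact: measure_ge0.
  rewrite big_nat1 add0n -nneseries_addn in H; last by move=> *; exact: measure_ge0.
  rewrite (_ : P = Qc 0); last first.
    by apply/seteqP; split=> z /=; [move=> ?; split => //; rewrite cnt0 | case].
  apply: le_trans H; rewrite le_eqVlt; apply/orP; left; apply/eqP.
  by congr (_ + _)%E; apply: eq_eseriesr => i _; rewrite addn1.
have strict : (sigma0%:E * nu B < mu P)%E.
  pose h x := sigma x (xsection P x).
  have mh : measurable_fun setT h := measurable_fun_xsection_finite_kernel sigma (mem_set mP).
  have h0 x : (0 <= h x)%E by exact: measure_ge0.
  have h1 x : (h x <= 1)%E.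
    rewrite /h; apply: (@le_trans _ _ (sigma x setT)); last by rewrite prob_kernel.
    by apply: le_measure; rewrite ?inE //; exact: measurable_xsection.
  have hfin x : h x \is a fin_num by rewrite ge0_fin_numE // (le_lt_trans (h1 x)) ?ltry.
  pose kk := (fun x => h x - sigma0%:E)^\+%E.
  have mk : measurable_fun B kk.
    apply: measurable_funepos; apply: emeasurable_funB => //.
    exact: measurable_funTS.
  have k0 x : (0 <= kk x)%E by exact: funepos_ge0.
  have muP : mu P = (\int[nu]_(x in B) h x)%E.
    rewrite muE // [RHS]integral_mkcond; apply: eq_integral => x _.
    rewrite patchE; case: ifPn => // /negP nB.
    rewrite /h (_ : xsection P x = set0) ?measure0 //.
    apply/seteqP; split => y // /set_mem Pxy; apply: nB; apply/mem_set; by exists (x, y).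
  rewrite muP.
  apply: (@lt_le_trans _ _ (\int[nu]_(x in B) (sigma0%:E + kk x))%E); last first.
    apply: ae_ge0_le_integral => //.
    - by move=> x _; rewrite adde_ge0 // lee_fin ltW.
    - exact: emeasurable_funD.
    - exact: measurable_funTS.
    apply: filterS Hae => x Hx Bx.
    have Hp : (sigma0%:E < h x)%E := Hx Bx.
    move: Hp; rewrite /kk funeposE -(fineK (hfin x)) -EFinB lte_fin => Hp.
    rewrite max_l; last by rewrite lee_fin subr_ge0 ltW.
    rewrite -EFinD lee_fin; lra.
  rewrite ge0_integralD //; try by move=> *; rewrite lee_fin ltW.
  rewrite integral_cst // muleC -[X in (X < _)%E]adde0 lteD2lE; last first.
    by rewrite fin_numM // ge0_fin_numE ?measure_ge0 // (le_lt_trans (probability_le1 nu mB)) ?ltry.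
  rewrite lt0e integral_ge0 // andbT; apply/negP => /eqP H0.
  have : ae_eq nu B kk (cst 0%E).
    apply/ae_eq_integral_abs => //.
    by rewrite -H0; apply: eq_integral => x _; rewrite gee0_abs.
  move=> [N2 [mN2 N20 sN2]].
  move: Hae => [N1 [mN1 N10 sN1]].
  have : (nu B <= nu (N1 `|` N2))%E.
    apply: le_measure; rewrite ?inE //; first exact: measurableU.
    move=> x Bx; apply: contrapT => /not_orP [n1 n2].
    have Hp : (sigma0%:E < h x)%E.
      apply: contrapT => H; apply: n1; apply: sN1 => /= H'; exact: H (H' Bx).
    have Hk : kk x = 0%E.
      apply: contrapT => H; apply: n2; apply: sN2 => /= H'; exact: H (H' Bx).
    move: Hp Hk; rewrite /kk funeposE -(fineK (hfin x)) -EFinB lte_fin => Hp.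
    rewrite max_l; last by rewrite lee_fin subr_ge0 ltW.
    by case; lra.
  rewrite leNgt => /negP; apply.
  apply: le_lt_trans (measureU2 _ _ _) _ => //.
  rewrite [X in (X + _ < _)%E](_ : _ = 0%E); last exact: N10.
  rewrite [X in (_ + X < _)%E](_ : _ = 0%E); last exact: N20.
  by rewrite adde0.
have L := le_int_nm nu B (Nl sigma F P l sigma0) (fun x => 1 + \sum_(k <oo) u x k)%E
  (fun x _ => adde_ge0 lee01 (nneseries_ge0 (fun n _ _ => u0 x n))) (fun x _ => pt x).
rewrite Sint in L.
set S := (\sum_(k <oo) mu (Qc k.+1))%E in L ser.
have S0 : (0 <= S)%E by apply: nneseries_ge0 => *; exact: measure_ge0.
have fa : nu B \is a fin_num.
  by rewrite ge0_fin_numE ?measure_ge0 // (le_lt_trans (probability_le1 nu mB)) ?ltry.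
have fp : mu P \is a fin_num.
  by rewrite ge0_fin_numE ?measure_ge0 // (le_lt_trans (probability_le1 mu mP)) ?ltry.
have fS : S \is a fin_num.
  rewrite ge0_fin_numE // (le_lt_trans _ (ltry (l%:R : R))) //.
  by apply: le_trans ser; rewrite leeDr // measure_ge0.
move: L ser strict; rewrite -(fineK fa) -(fineK fp) -(fineK fS).
move=> L ser0 strict0.
have ser : fine (mu P) + fine S <= l%:R by rewrite -lee_fin EFinD.
have strict : sigma0 * fine (nu B) < fine (mu P) by rewrite -lte_fin EFinM.
apply: le_lt_trans L _.
rewrite (_ : ((fine (nu B))%:E + c%:E * (fine S)%:E)%E = (fine (nu B) + c * fine S)%:E) //.
rewrite lte_fin.
set a := fine (nu B) in ser strict *; set p := fine (mu P) in ser strict *;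
set sr := fine S in ser strict *.
rewrite (_ : l%:R / sigma0 = c * (l%:R - sigma0 * a) + a); last first.
  by rewrite /c; field; exact: lt0r_neq0.
rewrite addrC ltrD2r ltr_pM2l //; lra.
Qed.
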